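(* Let $\langle\mathcal{X},\mathsf{cap},\mathsf{rf}\rangle$ be a $\textsf{VCh-rf}$ instance with $\mathcal{X}=\langle\mathsf{S},\mathsf{po}\rangle$ in which every channel is synchronous, and suppose every send event of $\mathsf{S}$ is related by $\mathsf{rf}$ to exactly one receive event, every receive event of $\mathsf{S}$ is related by $\mathsf{rf}$ to exactly one send event, and for every $(s,r)\in\mathsf{rf}$ the events $s$ and $r$ belong to different threads. Then $\langle\mathcal{X},\mathsf{cap},\mathsf{rf}\rangle$ is consistent if and only if its send-receive graph $G_{\mathsf{sync}}$ is acyclic.
   Context: Channels and events. Each channel $\mathtt{ch}$ has a capacity $\mathsf{cap}(\mathtt{ch})\in\mathbb{N}$; $\mathtt{ch}$ is synchronous if $\mathsf{cap}(\mathtt{ch})=0$ and asynchronous otherwise. An event is a tuple $e=\langle id,\tau,\mathsf{op}(\mathtt{ch},\mathsf{val})\rangle$ with a unique identifier $id$, a thread $\tau$, an operation $\mathsf{op}\in\{\mathtt{snd},\mathtt{rcv}\}$, a channel $\mathtt{ch}$ and a value $\mathsf{val}$. An execution is a finite sequence $\sigma$ of distinct events. $\sigma$ is well-formed (w.r.t. $\mathsf{cap}$) if: (i) for every asynchronous $\mathtt{ch}$ and every prefix $\pi$ of $\sigma$, $R_\pi(\mathtt{ch})\le S_\pi(\mathtt{ch})\le R_\pi(\mathtt{ch})+\mathsf{cap}(\mathtt{ch})$, where $S_\pi(\mathtt{ch})$, $R_\pi(\mathtt{ch})$ are the numbers of send, resp. receive, events on $\mathtt{ch}$ in $\pi$;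 (ii) for every synchronous $\mathtt{ch}$, every send on $\mathtt{ch}$ is immediately followed in $\sigma$ by a receive on $\mathtt{ch}$ of a different thread, and every receive on $\mathtt{ch}$ is immediately preceded in $\sigma$ by a send on $\mathtt{ch}$ of a different thread; (iii) for every channel $\mathtt{ch}$ and every $i$, if $\sigma$ contains an $i$-th receive on $\mathtt{ch}$, then the $i$-th send on $\mathtt{ch}$ has the same value as it. The program order $\mathsf{po}_\sigma$ is the set of pairs $(e,f)$ with $e$ before $f$ in $\sigma$ and in the same thread; the reads-from relation $\mathsf{rf}_\sigma$ is the set of pairs $(s,r)$ such that for some channel $\mathtt{ch}$ and some $i$, $s$ is the $i$-th send and $r$ the $i$-th receive on $\mathtt{ch}$ in $\sigma$. An abstract execution is $\mathcal{X}=\langle \mathsf{S},\mathsf{po}\rangle$ where $\mathsf{S}$ is a finite set of events and $\mathsf{po}$ is a strict order that totally orders the events of each thread and relates no events of different threads. An instance of $\textsf{VCh-rf}$ is $\langle\mathcal{X},\mathsf{cap},\mathsf{rf}\rangle$ where $\mathsf{cap}$ is a capacity function on the channels occurring in $\mathsf{S}$ and $\mathsf{rf}$ is a set of pairs $(s,r)$ of a send and a receive event of $\mathsf{S}$ on the same channel; it is consistent if there is an execution $\sigma$ whose set of events is $\mathsf{S}$, with $\mathsf{po}_\sigma=\mathsf{po}$, $\sigma$ well-formed, and $\mathsf{rf}_\sigma=\mathsf{rf}$. In this problem values are irrelevant (equivalently, matched events are assumed to carry equal values). Send-receive graph. $G_{\mathsf{sync}}=(V,E)$ is the directed graph with $V=\mathsf{rf}$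 (the set of matched pairs $\langle s,r\rangle$) and an edge from $\langle s_1,r_1\rangle$ to $\langle s_2,r_2\rangle$ iff some $e_1\in\{s_1,r_1\}$ is the immediate $\mathsf{po}$-predecessor of some $e_2\in\{s_2,r_2\}$. *)

(* Defs.v *)
From mathcomp Require Import all_boot.
Set Implicit Arguments. Unset Strict Implicit. Unset Printing Implicit Defensive.

(* Events are the elements of a finite type T (identifiers = the elements
   themselves, hence distinct).
   Values are irrelevant. *)

Section Defs.
Variables (T : finType) (Th C : eqType).
Variables (thr : T -> Th) (isSnd : T -> bool) (ch : T -> C).

(* X = <S, po> with S = all of T is an abstract execution *)
Definition abstract_execution (po : rel T) : Prop :=
  [/\ (forall e, ~~ po e e),
      (forall e f g, po e f -> po f g -> po e g),
      (forall e f, thr e = thr f -> e != f -> po e f || po f e)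
    & (forall e f, po e f -> thr e = thr f)].

Definition rf_wt (rf : rel T) : Prop :=
  forall s r, rf s r -> [/\ isSnd s, ~~ isSnd r & ch s = ch r].

Definition nS (c : C) (p : seq T) := count (fun x => isSnd x && (ch x == c)) p.
Definition nR (c : C) (p : seq T) := count (fun x => ~~ isSnd x && (ch x == c)) p.

Definition po_of (sigma : seq T) : rel T := fun e f =>
  [&& e \in sigma, f \in sigma, index e sigma < index f sigma & thr e == thr f].

Definition rank (sigma : seq T) (e : T) : nat :=
  count (fun x => (isSnd x == isSnd e) && (ch x == ch e)) (take (index e sigma) sigma).

Definition rf_of (sigma : seq T) : rel T := fun s r =>
  [&& s \in sigma, r \in sigma, isSnd s, ~~ isSnd r, ch s == ch r
    & rank sigma s == rank sigma r].

(* well-formedness (conditions (i),(ii); (iii) is vacuous since values are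
   irrelevant) *)
Definition well_formed (cap : C -> nat) (sigma : seq T) : Prop :=
  (forall c, 0 < cap c -> forall n,
      nR c (take n sigma) <= nS c (take n sigma) <= nR c (take n sigma) + cap c)
  /\ (forall x, x \in sigma -> cap (ch x) = 0 ->
      if isSnd x then
        exists y, [/\ y \in sigma, index y sigma = (index x sigma).+1,
                      ~~ isSnd y, ch y = ch x & thr y != thr x]
      else
        exists y, [/\ y \in sigma, (index y sigma).+1 = index x sigma,
                      isSnd y, ch y = ch x & thr y != thr x]).

Definition consistent (po : rel T) (cap : C -> nat) (rf : rel T) : Prop :=
  exists sigma : seq T,
    [/\ uniq sigma, (forall e, e \in sigma),
        (forall e f, po_of sigma e f = po e f),
        well_formed cap sigma
      & (forall s r, rf_of sigma s r = rf s r)].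

Definition ipo (po : rel T) (e f : T) : bool :=
  po e f && [forall g, ~~ (po e g && po g f)].

Definition gsync_edge (po rf : rel T) (a b : T * T) : bool :=
  [&& rf a.1 a.2, rf b.1 b.2 &
      [exists e1 : T, exists e2 : T,
         [&& (e1 == a.1) || (e1 == a.2), (e2 == b.1) || (e2 == b.2) & ipo po e1 e2]]].

Definition gsync_acyclic (po rf : rel T) : Prop :=
  forall (v : T * T) (p : seq (T * T)),
    path (gsync_edge po rf) v p -> last v p = v -> p = [::].

End Defs.

(* Main.v *)
Require Import Defs.
From mathcomp Require Import all_boot zify.
Set Implicit Arguments. Unset Strict Implicit. Unset Printing Implicit Defensive.

Lemma count_take_mono (T : Type) (p : pred T) (s : seq T) m n :
  m <= n -> count p (take m s) <= count p (take n s).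
Proof.
move=> Hmn; rewrite -(subnKC Hmn) takeD count_cat; exact: leq_addr.
Qed.

Lemma count_take_step (T : Type) (x0 : T) (p : pred T) (s : seq T) n :
  n < size s -> count p (take n.+1 s) = count p (take n s) + p (nth x0 s n).
Proof. by move=> Hn; rewrite (take_nth x0 Hn) -cats1 count_cat /= addn0. Qed.

Lemma par_lemma (T : eqType) (isSnd : T -> bool) (C : eqType) (ch : T -> C) (sigma : seq T) (x0 : T) :
  uniq sigma ->
  (forall x, x \in sigma -> isSnd x -> exists y, [/\ y \in sigma, index y sigma = (index x sigma).+1 & ~~ isSnd y]) ->
  (forall x, x \in sigma -> ~~ isSnd x -> exists y, [/\ y \in sigma, (index y sigma).+1 = index x sigma & isSnd y]) ->
  forall i, i < size sigma -> isSnd (nth x0 sigma i) = ~~ odd i.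
Proof.
move=> Hu Hs Hr; elim=> [|i IH] Hi.
  case: (boolP (isSnd (nth x0 sigma 0))) => // Hn; exfalso.
  have [y [_ Hy _]] := Hr _ (mem_nth x0 Hi) Hn.
  by rewrite index_uniq in Hy.
have Hi' : i < size sigma by apply: ltnW.
have := IH Hi'; rewrite /=; case: (odd i) => /= Hsi.
  case: (boolP (isSnd (nth x0 sigma i.+1))) => // Hn.
  have [y [Hy1 Hy2 Hy3]] := Hr _ (mem_nth x0 Hi) Hn.
  rewrite index_uniq // in Hy2; case: Hy2 => Hy2.
  by move: Hy3; rewrite -(nth_index x0 Hy1) Hy2 Hsi.
have [y [Hy1 Hy2 Hy3]] := Hs _ (mem_nth x0 Hi') Hsi.
rewrite index_uniq // in Hy2.
by move: Hy3; rewrite -(nth_index x0 Hy1) Hy2 => /negbTE.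
Qed.

Lemma rf_of_adj (T : finType) (isSnd : T -> bool) (C : eqType) (ch : T -> C) (sigma : seq T) (x0 : T) :
  uniq sigma ->
  (forall x, x \in sigma -> isSnd x -> exists y, [/\ y \in sigma, index y sigma = (index x sigma).+1, ~~ isSnd y & ch y = ch x]) ->
  (forall x, x \in sigma -> ~~ isSnd x -> exists y, [/\ y \in sigma, (index y sigma).+1 = index x sigma & isSnd y]) ->
  forall s r, rf_of isSnd ch sigma s r = [&& s \in sigma, r \in sigma, isSnd s & index r sigma == (index s sigma).+1].
Proof.
move=> Hu Hs Hr.
have Hs' : forall x, x \in sigma -> isSnd x -> exists y, [/\ y \in sigma, index y sigma = (index x sigma).+1 & ~~ isSnd y].
  by move=> x Hx Hx'; have [y [? ? ? ?]] := Hs x Hx Hx'; exists y.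
have par := @par_lemma T isSnd C ch sigma x0 Hu Hs' Hr.
have at_s : forall i, i < size sigma -> ~~ odd i -> isSnd (nth x0 sigma i).
  by move=> i Hi Ho; rewrite par // Ho.
have at_r : forall i, i < size sigma -> odd i -> ~~ isSnd (nth x0 sigma i).
  by move=> i Hi Ho; rewrite par // Ho.
have FG : forall c n, 2 * n <= size sigma ->
    count (fun x => isSnd x && (ch x == c)) (take (2 * n) sigma) =
    count (fun x => ~~ isSnd x && (ch x == c)) (take (2 * n) sigma).
  move=> c; elim=> [|n IH] Hn; first by rewrite muln0 take0.
  have H1 : 2 * n < size sigma by lia.
  have H2 : (2 * n).+1 < size sigma by lia.
  have -> : 2 * n.+1 = (2 * n).+2 by lia.
  rewrite !(count_take_step x0) // IH; last by lia.
  have O1 : ~~ odd (2 * n) by rewrite oddM.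
  have O2 : odd (2 * n).+1 by rewrite /= oddM.
  have A1 := at_s _ H1 O1.
  have A2 := at_r _ H2 O2.
  have [y [Hy1 Hy2 Hy3 Hy4]] := Hs _ (mem_nth x0 H1) A1.
  rewrite index_uniq // in Hy2.
  move: Hy4; rewrite -(nth_index x0 Hy1) Hy2 => ->.
  by rewrite A1 (negbTE A2) /= !addn0.
move=> s r; apply/idP/idP.
  rewrite /rf_of => /and5P [Hsi Hri Hss Hnr /andP [/eqP Hc /eqP Hrk]].
  rewrite Hsi Hri Hss /=; apply/eqP.
  set a := index s sigma in Hrk *; set b := index r sigma in Hrk *.
  have Ha : a < size sigma by rewrite index_mem.
  have Hb : b < size sigma by rewrite index_mem.
  have pa := par a Ha; rewrite nth_index // Hss in pa.
  have pb := par b Hb; rewrite nth_index // (negbTE Hnr) in pb.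
  have Ha2 : a = 2 * a./2.
    by have := odd_double_half a; rewrite -(negbK (odd a)) -pa /= add0n -mul2n => ->.
  have Hb2 : b = 2 * b./2 + 1.
    by have := odd_double_half b; move: pb; case: (odd b) => // _ /=; rewrite -mul2n addnC => ->.
  set c := ch s.
  have E1 : rank isSnd ch sigma s = count (fun x => isSnd x && (ch x == c)) (take a sigma).
    by rewrite /rank; apply: eq_count => x; rewrite Hss eqb_id.
  have E2 : rank isSnd ch sigma r = count (fun x => ~~ isSnd x && (ch x == c)) (take b sigma).
    by rewrite /rank; apply: eq_count => x; rewrite (negbTE Hnr) eqbF_neg /c Hc.
  rewrite E1 E2 in Hrk.
  case: (ltngtP a.+1 b) => Hab //.
  - exfalso.
    have M1 := count_take_mono (fun x => isSnd x && (ch x == c)) sigma (_ : a.+1 <= 2 * b./2).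
    rewrite (count_take_step x0) // nth_index // Hss eqxx in M1.
    have M2 := FG c b./2 ltac:(lia).
    have M3 : count (fun x => ~~ isSnd x && (ch x == c)) (take b sigma) =
              count (fun x => ~~ isSnd x && (ch x == c)) (take (2 * b./2) sigma).
      rewrite {1}Hb2 addn1 (count_take_step x0); last by lia.
      by rewrite at_s /= ?addn0 //; [lia | rewrite oddM].
    have := M1 ltac:(lia); lia.
  - exfalso.
    have M1 := count_take_mono (fun x => ~~ isSnd x && (ch x == c)) sigma (_ : b.+1 <= a).
    rewrite (count_take_step x0) // nth_index // Hnr /c -Hc eqxx in M1.
    have M2 := FG c a./2 ltac:(lia).
    rewrite -Ha2 in M2.
    move: M1; rewrite /= -/c => M1; have := M1 ltac:(lia); lia.
case/and4P => Hsi Hri Hss /eqP Hab.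
set a := index s sigma in Hab.
have Ha : a < size sigma by rewrite index_mem.
have Hb : a.+1 < size sigma by rewrite -Hab index_mem.
have pa := par a Ha; rewrite nth_index // Hss in pa.
have Ha2 : a = 2 * a./2.
  by have := odd_double_half a; rewrite -(negbK (odd a)) -pa /= add0n -mul2n => ->.
have [y [Hy1 Hy2 Hy3 Hy4]] := Hs _ Hsi Hss.
have Eyr : y = r by apply: (index_inj x0 Hy1 Hri); rewrite Hy2 Hab.
subst y.
rewrite /rf_of Hsi Hri Hss Hy3 Hy4 eqxx /=.
rewrite /rank Hab (count_take_step x0) // nth_index // Hss (negbTE Hy3) Hy4 addn0.
rewrite -/a (eq_count (a2 := fun x => isSnd x && (ch x == ch s))); last first.
  by move=> x; rewrite eqb_id.
rewrite (eq_count (a1 := fun x => (isSnd x == false) && (ch x == ch s))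
                  (a2 := fun x => ~~ isSnd x && (ch x == ch s))); last first.
  by move=> x; rewrite eqbF_neg.
by rewrite Ha2 FG -?Ha2 // ltnW.
Qed.

Lemma path_incr (T : eqType) (e : rel T) (mu : T -> nat) :
  (forall x y, e x y -> mu x < mu y) ->
  forall p v, path e v p -> p != [::] -> mu v < mu (last v p).
Proof.
move=> He; elim=> [//|w q IH] v /= /andP [Hvw Hp] _.
case: q IH Hp => [|w' q] IH Hp; first exact: He.
exact: (ltn_trans (He _ _ Hvw) (IH w Hp isT)).
Qed.

Lemma dir1 (T : finType) (Th C : eqType)
    (thr : T -> Th) (isSnd : T -> bool) (ch : T -> C)
    (po : rel T) (cap : C -> nat) (rf : rel T) :
  abstract_execution thr po ->
  (forall e : T, cap (ch e) = 0) ->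
  (forall s r : T, rf s r -> thr s <> thr r) ->
  consistent thr isSnd ch po cap rf -> gsync_acyclic po rf.
Proof.
move=> [Hirr Htr Htot Hthr] Hcap H6 [sigma [Hu Hall Hpo [_ Hwf] Hrf]] v p Hp Hl.
have x0 := v.1.
have Hs : forall x, x \in sigma -> isSnd x -> exists y, [/\ y \in sigma, index y sigma = (index x sigma).+1, ~~ isSnd y & ch y = ch x].
  move=> x Hx Hxs; have := Hwf x Hx (Hcap x); rewrite Hxs.
  by case=> y [? ? ? ? _]; exists y.
have Hr : forall x, x \in sigma -> ~~ isSnd x -> exists y, [/\ y \in sigma, (index y sigma).+1 = index x sigma & isSnd y].
  move=> x Hx Hxs; have := Hwf x Hx (Hcap x); rewrite (negbTE Hxs).
  by case=> y [? ? ? ? _]; exists y.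
have adj := rf_of_adj x0 Hu Hs Hr.
have Hrf' : forall s r, rf s r -> index r sigma = (index s sigma).+1.
  by move=> s r; rewrite -Hrf adj => /and4P [_ _ _ /eqP].
have Hedge : forall a b, gsync_edge po rf a b -> index a.1 sigma < index b.1 sigma.
  move=> [s1 r1] [s2 r2] /and3P [/= Ha Hb /existsP [e1 /existsP [e2 /and3P [He1 He2 /andP [Hpo12 _]]]]].
  have Ia := Hrf' _ _ Ha; have Ib := Hrf' _ _ Hb.
  move: Hpo12; rewrite -Hpo => /and4P [He1i He2i Hlt /eqP Hth].
  have Hth' : thr e1 = thr e2 by [].
  case: (ltngtP (index s1 sigma) (index s2 sigma)) => // Hc; exfalso.
    by move: He1 He2 => /= /orP [] /eqP Eq1 /orP [] /eqP Eq2; subst; lia.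
  have E1 : s1 = s2 by apply: (index_inj x0 (Hall _) (Hall _)).
  have E2 : r1 = r2 by apply: (index_inj x0 (Hall _) (Hall _)); rewrite Ia Ib Hc.
  subst s2 r2.
  move: He1 He2 => /= /orP [] /eqP Eq1 /orP [] /eqP Eq2; subst; try lia.
    exact: (H6 _ _ Ha Hth').
case: p Hp Hl => // w q Hp Hl.
have := path_incr Hedge Hp isT; rewrite Hl; lia.
Qed.

Definition partner (T : finType) (isSnd : T -> bool) (rf : rel T) (e : T) : T :=
  odflt e [pick f | if isSnd e then ~~ isSnd f && rf e f else isSnd f && rf f e].
Definition pr (T : finType) (isSnd : T -> bool) (rf : rel T) (e : T) : T * T :=
  if isSnd e then (e, partner isSnd rf e) else (partner isSnd rf e, e).

Lemma partner_spec (T : finType) (isSnd : T -> bool) (rf : rel T) :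
  (forall s : T, isSnd s -> exists! r : T, ~~ isSnd r /\ rf s r) ->
  (forall r : T, ~~ isSnd r -> exists! s : T, isSnd s /\ rf s r) ->
  forall e, if isSnd e then ~~ isSnd (partner isSnd rf e) && rf e (partner isSnd rf e)
            else isSnd (partner isSnd rf e) && rf (partner isSnd rf e) e.
Proof.
move=> H4 H5 e; rewrite /partner; case: pickP => [f Hf | Hn] /=; first exact: Hf.
case: (boolP (isSnd e)) => He /= in Hn *.
  have [r [[Hr1 Hr2] _]] := H4 e He.
  by have := Hn r; rewrite Hr1 Hr2.
have [s [[Hs1 Hs2] _]] := H5 e He.
by have := Hn s; rewrite Hs1 Hs2.
Qed.

Lemma pr_rf (T : finType) (isSnd : T -> bool) (rf : rel T) :
  (forall s : T, isSnd s -> exists! r : T, ~~ isSnd r /\ rf s r) ->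
  (forall r : T, ~~ isSnd r -> exists! s : T, isSnd s /\ rf s r) ->
  forall e, rf (pr isSnd rf e).1 (pr isSnd rf e).2.
Proof.
move=> H4 H5 e; have := partner_spec H4 H5 e; rewrite /pr.
by case: (isSnd e) => /= /andP [].
Qed.

Lemma pr_pair (T : finType) (C : eqType) (isSnd : T -> bool) (ch : T -> C) (rf : rel T) :
  rf_wt isSnd ch rf ->
  (forall s : T, isSnd s -> exists! r : T, ~~ isSnd r /\ rf s r) ->
  (forall r : T, ~~ isSnd r -> exists! s : T, isSnd s /\ rf s r) ->
  forall s r, rf s r -> pr isSnd rf s = (s, r) /\ pr isSnd rf r = (s, r).
Proof.
move=> Hwt H4 H5 s r Hsr; have [Hs Hr _] := Hwt _ _ Hsr.
have Ps := partner_spec H4 H5 s; have Pr := partner_spec H4 H5 r.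
rewrite Hs in Ps; rewrite (negbTE Hr) in Pr.
rewrite /pr Hs (negbTE Hr); split.
  have [r0 [_ Hu]] := H4 s Hs.
  move: Ps => /andP [P1 P2].
  by rewrite -(Hu _ (conj P1 P2)) (Hu _ (conj Hr Hsr)).
have [s0 [_ Hu]] := H5 r Hr.
move: Pr => /andP [P1 P2].
by rewrite -(Hu _ (conj P1 P2)) (Hu _ (conj Hs Hsr)).
Qed.

Lemma pr_mem (T : finType) (isSnd : T -> bool) (rf : rel T) e :
  e = if isSnd e then (pr isSnd rf e).1 else (pr isSnd rf e).2.
Proof. by rewrite /pr; case: (isSnd e). Qed.

Lemma h_lt (T : finType) (E : rel T) :
  (forall v p, path E v p -> last v p = v -> p = [::]) ->
  forall a b, connect E a b -> a != b ->
  #|[pred u | connect E u a]| < #|[pred u | connect E u b]|.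
Proof.
move=> Hac a b Hab Hne; apply: proper_card; apply/properP; split.
  by apply/subsetP => u /=; rewrite !inE => Hu; apply: connect_trans Hu Hab.
exists b; first by rewrite inE connect0.
rewrite inE; apply/negP => Hba.
move: Hab Hba => /connectP [p Hp Hlp] /connectP [q Hq Hlq].
have Hpq : path E a (p ++ q) by rewrite cat_path Hp -Hlp Hq.
have := Hac _ _ Hpq; rewrite last_cat -Hlp -Hlq => /(_ erefl) Hpq0.
have Hp0 : p = [::] by case: p Hpq0 {Hp Hlp Hpq}.
by move: Hne; rewrite Hlp Hp0 eqxx.
Qed.

Lemma mem_pr (T : finType) (isSnd : T -> bool) (rf : rel T) e :
  (e == (pr isSnd rf e).1) || (e == (pr isSnd rf e).2).
Proof. by rewrite /pr; case: (isSnd e) => /=; rewrite eqxx ?orbT. Qed.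

Lemma po_connect (T : finType) (Th : eqType) (thr : T -> Th) (isSnd : T -> bool) (po rf : rel T) :
  abstract_execution thr po ->
  (forall s : T, isSnd s -> exists! r : T, ~~ isSnd r /\ rf s r) ->
  (forall r : T, ~~ isSnd r -> exists! s : T, isSnd s /\ rf s r) ->
  forall n e f, #|[pred g | po e g && po g f]| <= n -> po e f ->
  connect (gsync_edge po rf) (pr isSnd rf e) (pr isSnd rf f).
Proof.
move=> [Hirr Htr Htot Hthr] H4 H5; elim=> [|n IH] e f Hn Hef.
  apply: connect1; rewrite /gsync_edge !pr_rf //=.
  apply/existsP; exists e; apply/existsP; exists f; rewrite !mem_pr /ipo Hef /=.
  apply/forallP => g; apply/negP => Hg.
  have : g \in [pred g | po e g && po g f] by [].
  by move: Hn; rewrite leqn0 => /eqP /card0_eq ->.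
case: (boolP [forall g, ~~ (po e g && po g f)]) => Hall.
  apply: connect1; rewrite /gsync_edge !pr_rf //=.
  by apply/existsP; exists e; apply/existsP; exists f; rewrite !mem_pr /ipo Hef Hall.
move: Hall; rewrite negb_forall => /existsP [g]; rewrite negbK => /andP [Heg Hgf].
have Hsub1 : #|[pred x | po e x && po x g]| < #|[pred x | po e x && po x f]|.
  apply: proper_card; apply/properP; split.
    apply/subsetP => x; rewrite !inE => /andP [H1 H2].
    by rewrite H1 (Htr _ _ _ H2 Hgf).
  by exists g; rewrite !inE ?Heg ?Hgf ?(negbTE (Hirr g)) ?andbF.
have Hsub2 : #|[pred x | po g x && po x f]| < #|[pred x | po e x && po x f]|.
  apply: proper_card; apply/properP; split.
    apply/subsetP => x; rewrite !inE => /andP [H1 H2].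
    by rewrite H2 (Htr _ _ _ Heg H1).
  by exists g; rewrite !inE ?Heg ?Hgf ?(negbTE (Hirr g)).
apply: connect_trans (IH e g _ Heg) (IH g f _ Hgf).
  by rewrite -ltnS; apply: leq_trans Hsub1 Hn.
by rewrite -ltnS; apply: leq_trans Hsub2 Hn.
Qed.

Lemma dir2 (T : finType) (Th C : eqType)
    (thr : T -> Th) (isSnd : T -> bool) (ch : T -> C)
    (po : rel T) (cap : C -> nat) (rf : rel T) :
  abstract_execution thr po ->
  rf_wt isSnd ch rf ->
  (forall e : T, cap (ch e) = 0) ->
  (forall s : T, isSnd s -> exists! r : T, ~~ isSnd r /\ rf s r) ->
  (forall r : T, ~~ isSnd r -> exists! s : T, isSnd s /\ rf s r) ->
  (forall s r : T, rf s r -> thr s <> thr r) ->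
  gsync_acyclic po rf -> consistent thr isSnd ch po cap rf.
Proof.
move=> Hae Hwt Hcap H4 H5 H6 Hac.
have [Hirr Htr Htot Hthr] := Hae.
set E := gsync_edge po rf.
pose h a := #|[pred u | connect E u a]|.
pose N := #|{: T * T}|.
pose m a := h a * N + enum_rank a.
pose key e := 2 * m (pr isSnd rf e) + ~~ isSnd e.
have m_lt : forall a b, h a < h b -> m a < m b.
  move=> a b Hab; rewrite /m.
  have F : h a * N + N <= h b * N by rewrite -mulSnr; apply: leq_mul.
  have := ltn_ord (enum_rank a); rewrite -/N; lia.
have m_inj : forall a b, m a = m b -> a = b.
  move=> a b Hm; case: (ltngtP (h a) (h b)) => Hh.
  - by have := m_lt _ _ Hh; lia.
  - by have := m_lt _ _ Hh; lia.
  move: Hm; rewrite /m Hh => /addnI Hr; apply: enum_rank_inj; exact: val_inj.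
have key_inj : forall e f, key e = key f -> e = f.
  move=> e f Hk.
  have Hs : isSnd e = isSnd f.
    move: Hk; rewrite /key; case: (isSnd e); case: (isSnd f) => //= ; lia.
  have Hm : m (pr isSnd rf e) = m (pr isSnd rf f) by move: Hk; rewrite /key Hs; lia.
  have Hp := m_inj _ _ Hm.
  by rewrite (pr_mem isSnd rf e) (pr_mem isSnd rf f) Hp Hs.
have po_key : forall e f, po e f -> key e < key f.
  move=> e f Hef.
  have Hc := po_connect Hae H4 H5 (leqnn _) Hef.
  have Hne : pr isSnd rf e != pr isSnd rf f.
    apply/eqP => Hp.
    have Hth := Hthr _ _ Hef.
    have Hrf := pr_rf H4 H5 e.
    have He := pr_mem isSnd rf e; have Hf := pr_mem isSnd rf f.
    rewrite -Hp in Hf.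
    case: (isSnd e) He => He; case: (isSnd f) Hf => Hf.
    - by move: (Hirr e); rewrite {2}He -Hf Hef.
    - by apply: (H6 _ _ Hrf); rewrite -He -Hf.
    - by apply: (H6 _ _ Hrf); rewrite -He -Hf.
    - by move: (Hirr e); rewrite {2}He -Hf Hef.
  have := m_lt _ _ (h_lt Hac Hc Hne); rewrite /key; lia.
pose leT := fun x y => key x <= key y.
pose sigma := sort leT (enum T).
have Hu : uniq sigma by rewrite sort_uniq enum_uniq.
have Hall : forall e, e \in sigma by move=> e; rewrite mem_sort mem_enum.
have Hsort : sorted leT sigma by apply: sort_sorted => x y; exact: leq_total.
have Htrans : transitive leT by move=> y x z; exact: leq_trans.
have KI : forall x y, (index x sigma < index y sigma) = (key x < key y).
  move=> x y; apply/idP/idP => H.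
    have Hle := sorted_ltn_index Htrans Hsort x y (Hall x) (Hall y) H.
    rewrite ltn_neqAle (Hle : key x <= key y) andbT; apply/eqP => /key_inj Exy.
    by rewrite Exy ltnn in H.
  case: (ltngtP (index x sigma) (index y sigma)) => // Hc.
    by have := sorted_ltn_index Htrans Hsort y x (Hall y) (Hall x) Hc; rewrite /leT; lia.
  by have := index_inj x (Hall x) (Hall y) Hc => Exy; rewrite Exy ltnn in H.
have succ : forall x y, key y = (key x).+1 -> index y sigma = (index x sigma).+1.
  move=> x y Hk.
  have Hxy : index x sigma < index y sigma by rewrite KI Hk.
  have Hy : index y sigma < size sigma by rewrite index_mem.
  case: (ltngtP (index y sigma) (index x sigma).+1) => Hc; [lia | | by []].
  pose z := nth x sigma (index x sigma).+1.
  have Hz : index z sigma = (index x sigma).+1 by rewrite /z index_uniq //; apply: ltn_trans Hc Hy.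
  have Z1 : index x sigma < index z sigma by rewrite Hz.
  have Z2 : index z sigma < index y sigma by rewrite Hz.
  rewrite KI in Z1; rewrite KI in Z2; lia.
have Hsucc : forall x, isSnd x -> index (partner isSnd rf x) sigma = (index x sigma).+1.
  move=> x Hx; apply: succ.
  have Hp := partner_spec H4 H5 x; rewrite Hx in Hp; move: Hp => /andP [Hp1 Hp2].
  have [P1 P2] := pr_pair Hwt H4 H5 Hp2.
  by rewrite /key P1 P2 Hx (negbTE Hp1) addn0 addn1.
have Hpred : forall x, ~~ isSnd x -> (index (partner isSnd rf x) sigma).+1 = index x sigma.
  move=> x Hx; symmetry; apply: succ.
  have Hp := partner_spec H4 H5 x; rewrite (negbTE Hx) in Hp; move: Hp => /andP [Hp1 Hp2].
  have [P1 P2] := pr_pair Hwt H4 H5 Hp2.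
  by rewrite /key P1 P2 Hx Hp1 addn0 addn1.
exists sigma; split => //.
- move=> e f; rewrite /po_of !Hall /= KI; apply/idP/idP.
    move=> /andP [Hk /eqP Ht].
    have Hne : e != f by apply/eqP => Ee; rewrite Ee ltnn in Hk.
    case/orP: (Htot _ _ Ht Hne) => // Hfe.
    by have := po_key _ _ Hfe; lia.
  by move=> Hef; rewrite po_key //= (Hthr _ _ Hef) eqxx.
- split.
    move=> c Hc n.
    have Hp : forall x, (ch x == c) = false.
      by move=> x; apply/negbTE/eqP => Ex; move: Hc; rewrite -Ex Hcap.
    rewrite /nS /nR !(eq_count (a2 := pred0)) ?count_pred0 // => x; by rewrite Hp andbF.
  move=> x _ _; case: ifP => Hx.
    have Hp := partner_spec H4 H5 x; rewrite Hx in Hp; move: Hp => /andP [Hp1 Hp2].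
    have [_ _ Hch] := Hwt _ _ Hp2.
    exists (partner isSnd rf x); split => //; first exact: Hsucc.
    by apply/eqP => Et; apply: (H6 _ _ Hp2); rewrite Et.
  have Hp := partner_spec H4 H5 x; rewrite Hx in Hp; move: Hp => /andP [Hp1 Hp2].
  have [_ _ Hch] := Hwt _ _ Hp2.
  exists (partner isSnd rf x); split => //; first by apply: Hpred; rewrite Hx.
  by apply/eqP => Et; apply: (H6 _ _ Hp2); rewrite Et.
move=> s r.
have Hs : forall x, x \in sigma -> isSnd x -> exists y, [/\ y \in sigma, index y sigma = (index x sigma).+1, ~~ isSnd y & ch y = ch x].
  move=> x _ Hx; have Hp := partner_spec H4 H5 x; rewrite Hx in Hp; move: Hp => /andP [Hp1 Hp2].
  have [_ _ Hch] := Hwt _ _ Hp2.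
  by exists (partner isSnd rf x); split => //; exact: Hsucc.
have Hr : forall x, x \in sigma -> ~~ isSnd x -> exists y, [/\ y \in sigma, (index y sigma).+1 = index x sigma & isSnd y].
  move=> x _ Hx; have Hp := partner_spec H4 H5 x; rewrite (negbTE Hx) in Hp; move: Hp => /andP [Hp1 Hp2].
  by exists (partner isSnd rf x); split => //; exact: Hpred.
rewrite (rf_of_adj s Hu Hs Hr) !Hall /=; apply/idP/idP.
  move=> /andP [Hss /eqP Hi].
  have Hp := partner_spec H4 H5 s; rewrite Hss in Hp; move: Hp => /andP [Hp1 Hp2].
  have -> : r = partner isSnd rf s by apply: (index_inj s (Hall _) (Hall _)); rewrite Hsucc.
  exact: Hp2.
move=> Hsr; have [Hss _ _] := Hwt _ _ Hsr; rewrite Hss /=.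
have [P1 _] := pr_pair Hwt H4 H5 Hsr.
move: P1; rewrite /pr Hss => [[<-]]; by rewrite Hsucc.
Qed.

Theorem mainTheorem10 (T : finType) (Th C : eqType)
    (thr : T -> Th) (isSnd : T -> bool) (ch : T -> C)
    (po : rel T) (cap : C -> nat) (rf : rel T) :
  abstract_execution thr po ->
  rf_wt isSnd ch rf ->
  (forall e : T, cap (ch e) = 0) ->
  (forall s : T, isSnd s -> exists! r : T, ~~ isSnd r /\ rf s r) ->
  (forall r : T, ~~ isSnd r -> exists! s : T, isSnd s /\ rf s r) ->
  (forall s r : T, rf s r -> thr s <> thr r) ->
  (consistent thr isSnd ch po cap rf <-> gsync_acyclic po rf).
Proof.
move=> Hae Hwt Hcap H4 H5 H6; split.
  exact: (@dir1 T Th C thr isSnd ch po cap rf Hae Hcap H6).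
exact: (@dir2 T Th C thr isSnd ch po cap rf Hae Hwt Hcap H4 H5 H6).
Qed.
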